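(* Consider a finite-horizon tabular MDP with stationary transition kernel $P$, $S$ states, $A$ actions, horizon $H$. Fix $t\in[H]$ and $u>0$. Let $\mathcal D_2$ consist of $l$ i.i.d. episodes from behavior policy $\mu$, and let $V_{t+1},V^{\rm in}_{t+1}:\mathcal S\to\mathbb R$ be fixed (not depending on $\mathcal D_2$) with $\|V_{t+1}-V^{\rm in}_{t+1}\|_\infty\le2u$. Let $n'_{s,a}=\sum_{j=1}^l\sum_{v=1}^H\mathbf 1[s'^{(j)}_v=s,a'^{(j)}_v=a]$, $f(s,a)=4u\sqrt{\log(2HSA/\delta)/(l\sum_{t=1}^Hd^\mu_t(s,a))}$, and define $g_t(s,a)=P(\cdot|s,a)^\top[V_{t+1}-V^{\rm in}_{t+1}]-f(s,a)$ if $n'_{s,a}\le\frac12l\sum_{t=1}^Hd^\mu_t(s,a)$, and otherwise \[ g_t(s,a)=\frac1{n'_{s,a}}\sum_{j=1}^l\sum_{v=1}^H[V_{t+1}(s'^{(j)}_{v+1})-V^{\rm in}_{t+1}(s'^{(j)}_{v+1})]\mathbf 1[s'^{(j)}_v=s,a'^{(j)}_v=a]-f(s,a). \] Then with probability at least $1-\delta/H$, for all $(s,a)$ with $\sum_td^\mu_t(s,a)>0$, \[ 0\le P(\cdot|s,a)^\top[V_{t+1}-V^{\rm in}_{t+1}]-g_t(s,a)\le8u\sqrt{\frac{\log(2HSA/\delta)}{l\sum_{t=1}^Hd^\mu_t(s,a)}}. \]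
   Context: Episodes: $s_1\sim d_1$, $a_v\sim\mu_v(\cdot|s_v)$, $s_{v+1}\sim P(\cdot|s_v,a_v)$; $(s'^{(j)}_v,a'^{(j)}_v)$ denote the $j$-th episode of $\mathcal D_2$. $d^\mu_t(s,a)=\mathbb P^\mu(s_t=s,a_t=a)$. $\delta\in(0,1)$. *)

(* Defs.v *)
From HB Require Import structures.
From mathcomp Require Import all_boot all_order all_algebra.
From mathcomp Require Import reals exp.
Set Implicit Arguments. Unset Strict Implicit. Unset Printing Implicit Defensive.
Import Order.TTheory GRing.Theory Num.Theory.
Local Open Scope ring_scope.

(* An episode of length H: states s_1..s_{H+1} (indices 0..H of 'I_H.+1)
   and actions a_1..a_H (indices 0..H-1 of 'I_H). *)
Notation traj S A H := ({ffun 'I_H.+1 -> S} * {ffun 'I_H -> A})%type.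

Section MDP.
Variables (R : realType) (S A : finType) (H : nat).

Definition is_dist (T : finType) (p : T -> R) :=
  (forall x, 0 <= p x) /\ \sum_(x : T) p x = 1.

Definition st (e : traj S A H) (v : 'I_H) : S := e.1 (widen_ord (leqnSn H) v).
Definition act (e : traj S A H) (v : 'I_H) : A := e.2 v.
Definition nst (e : traj S A H) (v : 'I_H) : S := e.1 (lift ord0 v).

Variables (d1 : S -> R) (mu : 'I_H -> S -> A -> R) (P : S -> A -> S -> R).

Definition ep_prob (e : traj S A H) : R :=
  d1 (e.1 ord0) *
  \prod_(v < H) (mu v (st e v) (act e v) * P (st e v) (act e v) (nst e v)).

Definition dmu (t : 'I_H) (s : S) (a : A) : R :=
  \sum_(e : traj S A H | (st e t == s) && (act e t == a)) ep_prob e.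

Definition dsum (s : S) (a : A) : R := \sum_(t < H) dmu t s a.

Definition data_prob (l : nat) (D : {ffun 'I_l -> traj S A H}) : R :=
  \prod_(j < l) ep_prob (D j).

Definition ncount (l : nat) (D : {ffun 'I_l -> traj S A H}) (s : S) (a : A) : nat :=
  \sum_(j < l) \sum_(v < H) ((st (D j) v == s) && (act (D j) v == a)).

Definition PV (V Vin : S -> R) (s : S) (a : A) : R :=
  \sum_(s' : S) P s a s' * (V s' - Vin s').

Definition logterm (delta : R) : R :=
  ln (2 * H%:R * #|S|%:R * #|A|%:R / delta).

Definition fbonus (u delta : R) (l : nat) (s : S) (a : A) : R :=
  4 * u * Num.sqrt (logterm delta / (l%:R * dsum s a)).

Definition gest (V Vin : S -> R) (u delta : R) (l : nat)
    (D : {ffun 'I_l -> traj S A H}) (s : S) (a : A) : R :=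
  if (ncount D s a)%:R <= 2^-1 * l%:R * dsum s a
  then PV V Vin s a - fbonus u delta l s a
  else ((ncount D s a)%:R)^-1 *
         (\sum_(j < l) \sum_(v < H)
            (V (nst (D j) v) - Vin (nst (D j) v)) *
            ((st (D j) v == s) && (act (D j) v == a))%:R)
       - fbonus u delta l s a.

End MDP.

(* Main.v *)
Require Import Defs.
From HB Require Import structures.
From mathcomp Require Import all_boot all_order all_algebra.
From mathcomp Require Import reals exp.
From mathcomp Require Import boolp classical_sets functions topology normedtype sequences derive realfun.
From mathcomp Require Import interval_inference ring lra.
Set Implicit Arguments. Unset Strict Implicit. Unset Printing Implicit Defensive.
Import Order.TTheory GRing.Theory Num.Theory.
Import numFieldNormedType.Exports.
Local Open Scope ring_scope.

Section Mono.
Variable R : realType.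
Lemma nincr_from (f f' : R -> R) (a : R) :
  (forall x : R, is_derive x 1 f (f' x)) -> (forall x, a < x -> f' x <= 0) ->
  forall y, a <= y -> f y <= f a.
Proof.
move=> df hf y ay.
apply: (@ler0_derive1_nincry _ f a).
- by move=> x _; case: (df x).
- by move=> x; rewrite in_itv /= andbT => ax; rewrite derive1E; case: (df x) => _ ->; exact: hf.
- apply: derivable_within_continuous => x _; by case: (df x).
- by [].
- exact: ay.
Qed.
Lemma ndecr_upto (f f' : R -> R) (b : R) :
  (forall x : R, is_derive x 1 f (f' x)) -> (forall x, x < b -> 0 <= f' x) ->
  forall y, y <= b -> f y <= f b.
Proof.
move=> df hf y yb.
apply: (@ger0_derive1_ndecrNy _ f b).
- by move=> x _; case: (df x).
- by move=> x; rewrite in_itv /= => xb; rewrite derive1E; case: (df x) => _ ->; exact: hf.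
- apply: derivable_within_continuous => x _; by case: (df x).
- exact: yb.
- by [].
Qed.
End Mono.

Section Hoeff.
Variable R : realType.
Variable p : R.
Hypothesis p0 : 0 <= p.
Hypothesis p1 : p <= 1.

Let D (h : R) := 1 - p + p * expR h.

Let D_gt0 h : 0 < D h.
Proof.
rewrite /D; have [->|pn0] := eqVneq p 0; first by rewrite subr0 mul0r addr0.
have pg : 0 < p by rewrite lt_def pn0.
by rewrite ltr_pwDr ?subr_ge0 // mulr_gt0 // expR_gt0.
Qed.

Let dD (x : R) : is_derive x 1 D (p * expR x).
Proof. by apply: is_derive_eq; rewrite add0r mul1r. Qed.

Let dlD (x : R) : is_derive x 1 (fun h => ln (D h)) ((D x)^-1 * (p * expR x)).
Proof. exact: (is_derive1_comp (is_derive1_ln (D_gt0 x)) (dD x)). Qed.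

Let g (h : R) := h - ln (D h).
Let dg (x : R) : is_derive x 1 g (1 - (D x)^-1 * (p * expR x)).
Proof. exact: (is_deriveB (is_derive_id x 1) (dlD x)). Qed.

Let eg (x : R) : is_derive x 1 (fun h => expR (g h)) (expR (g x) * (1 - (D x)^-1 * (p * expR x))).
Proof. exact: (is_derive1_comp (is_derive_expR (g x)) (dg x)). Qed.

Let psi (h : R) := p * expR (g h) - p - h / 4.
Let dpsi (x : R) : is_derive x 1 psi (p * (expR (g x) * (1 - (D x)^-1 * (p * expR x))) - 4^-1).
Proof. rewrite /psi. have := eg x => ?. apply: is_derive_eq. by rewrite !scaler0 subr0 add0r [_%:A]mulr1. Qed.

Let phi (h : R) := ln (D h) - h * p - h ^+ 2 / 8.
Let dphi (x : R) : is_derive x 1 phi (psi x).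
Proof.
rewrite /phi. have := dlD x => ?. apply: is_derive_eq.
rewrite !scaler0 !add0r ![_%:A]mulr1 /psi /g expRB lnK ?posrE ?D_gt0 //.
rewrite /GRing.scale /=. field. by rewrite gt_eqF ?D_gt0.
Qed.

Let eg_eq (x : R) : expR (g x) = expR x / D x.
Proof. by rewrite /g expRB lnK ?posrE ?D_gt0. Qed.

Let dpsi_le0 (x : R) : p * (expR (g x) * (1 - (D x)^-1 * (p * expR x))) - 4^-1 <= 0.
Proof.
rewrite eg_eq.
have -> : p * (expR x / D x * (1 - (D x)^-1 * (p * expR x))) =
   ((D x)^-1 * (p * expR x)) * (1 - (D x)^-1 * (p * expR x)) by ring.
set z := (D x)^-1 * (p * expR x).
have := sqr_ge0 (z - 2^-1). nra.
Qed.

Let D0 : D 0 = 1.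
Proof. by rewrite /D expR0 mulr1 subrK. Qed.

Let psi0 : psi 0 = 0.
Proof. by rewrite /psi /g D0 ln1 subr0 expR0 mulr1 subrr mul0r subr0. Qed.

Let phi0 : phi 0 = 0.
Proof. by rewrite /phi D0 ln1 mul0r expr0n /= mul0r !subr0. Qed.

Let phi_le0 h : phi h <= 0.
Proof.
have psi_nincr x y : x <= y -> psi y <= psi x.
  move=> xy; apply: (@nincr_from R psi _ x dpsi) => //.
have [h0|h0] := leP 0 h.
  rewrite -phi0; apply: (@nincr_from R phi psi 0 dphi) => // x x0.
  by rewrite -psi0; apply: psi_nincr; exact: ltW.
rewrite -phi0; apply: (@ndecr_upto R phi psi 0 dphi); last exact: ltW.
by move=> x x0; rewrite -psi0; apply: psi_nincr; exact: ltW.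
Qed.

Lemma hoeff_key h : 1 - p + p * expR h <= expR (h * p + h ^+ 2 / 8).
Proof.
rewrite -[X in X <= _](@lnK _ (D h)) ?posrE ?D_gt0 // ler_expR.
have := phi_le0 h; rewrite /phi; lra.
Qed.



End Hoeff.


Section HoeffFin.
Variable R : realType.

Lemma tangent (c x : R) : expR c * (1 + (x - c)) <= expR x.
Proof.
have -> : expR x = expR c * expR (x - c) by rewrite -expRD addrC subrK.
by rewrite ler_wpM2l ?expR_ge0 ?expR_ge1Dx.
Qed.

Lemma chord (b t z : R) : 0 < b -> -b <= z -> z <= b ->
  expR (t * z) <= ((b - z) * expR (- (t * b)) + (b + z) * expR (t * b)) / (2 * b).
Proof.
move=> b0 zl zu.
rewrite ler_pdivlMr ?mulr_gt0 //.
have h1 := tangent (t * z) (- (t * b)).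
have h2 := tangent (t * z) (t * b).
have bz1 : 0 <= b - z by rewrite subr_ge0.
have bz2 : 0 <= b + z by rewrite addrC -lerBlDr sub0r.
have := ler_wpM2l bz1 h1; have := ler_wpM2l bz2 h2.
set E := expR (t * z). move=> H2 H1.
have -> : E * (2 * b) = (b - z) * (E * (1 + (- (t * b) - t * z))) + (b + z) * (E * (1 + (t * b - t * z))) by ring.
exact: lerD.
Qed.

Lemma hoeffding_fin (T : finType) (pi Z : T -> R) (b t : R) :
  (forall x, 0 <= pi x) -> \sum_x pi x = 1 -> 0 < b ->
  (forall x, -b <= Z x) -> (forall x, Z x <= b) ->
  \sum_x pi x * expR (t * (Z x - \sum_y pi y * Z y)) <= expR (t ^+ 2 * b ^+ 2 / 2).
Proof.
move=> pi0 pi1 b0 Zl Zu.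
set mu := \sum_y pi y * Z y.
have mul : -b <= mu.
  have -> : -b = \sum_y pi y * (-b) by rewrite -big_distrl /= pi1 mul1r.
  by apply: ler_sum => y _; rewrite ler_wpM2l.
have muu : mu <= b.
  have -> : b = \sum_y pi y * b by rewrite -big_distrl /= pi1 mul1r.
  by apply: ler_sum => y _; rewrite ler_wpM2l.
set e1 := expR (- (t * b)); set e2 := expR (t * b).
have step1 : \sum_x pi x * expR (t * (Z x - mu)) =
    (\sum_x pi x * expR (t * Z x)) * expR (- (t * mu)).
  rewrite big_distrl /=; apply: eq_bigr => x _.
  by rewrite -mulrA -expRD mulrBr.
have step2 : \sum_x pi x * expR (t * Z x) <= ((b - mu) * e1 + (b + mu) * e2) / (2 * b).
  apply: (@le_trans _ _ (\sum_x pi x * (((b - Z x) * e1 + (b + Z x) * e2) / (2 * b)))).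
    by apply: ler_sum => x _; rewrite ler_wpM2l // chord.
  have -> : \sum_x pi x * (((b - Z x) * e1 + (b + Z x) * e2) / (2 * b)) =
     \sum_x (pi x * ((b * e1 + b * e2) / (2 * b)) + (pi x * Z x) * ((e2 - e1) / (2 * b))).
    apply: eq_bigr => x _. ring.
  rewrite big_split /= -!big_distrl /= pi1 -/mu.
  by rewrite le_eqVlt; apply/orP; left; apply/eqP; field; rewrite gt_eqF.
suff H : (\sum_x pi x * expR (t * Z x)) * expR (- (t * mu)) <= expR (t ^+ 2 * b ^+ 2 / 2).
  by move: H; rewrite -step1.

apply: (@le_trans _ _ (((b - mu) * e1 + (b + mu) * e2) / (2 * b) * expR (- (t * mu)))).
  by apply: ler_wpM2r; [exact: expR_ge0 | exact: step2].
set p := (b + mu) / (2 * b).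
have bmu : 0 <= b + mu by lra.
have p0 : 0 <= p by rewrite /p divr_ge0 // mulr_ge0 // ltW.
have p1 : p <= 1 by rewrite /p ler_pdivrMr ?mulr_gt0 // mul1r; lra.
have key := @hoeff_key R p p0 p1 (2 * t * b).
have e2n0 : e2 != 0 by rewrite gt_eqF // expR_gt0.
have eq1 : ((b - mu) * e1 + (b + mu) * e2) / (2 * b) * expR (- (t * mu)) =
    (1 - p + p * expR (2 * t * b)) * expR (- (t * b) - t * mu).
  have -> : expR (2 * t * b) = e2 * e2 by rewrite -expRD; congr expR; ring.
  rewrite expRD -/e1 /e1 expRN -/e2 /p.
  by field; rewrite e2n0 /= gt_eqF.
suff H : (1 - p + p * expR (2 * t * b)) * expR (- (t * b) - t * mu) <= expR (t ^+ 2 * b ^+ 2 / 2).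
  by move: H; rewrite -eq1.
apply: (@le_trans _ _ (expR (2 * t * b * p + (2 * t * b) ^+ 2 / 8) * expR (- (t * b) - t * mu))).
  by rewrite ler_wpM2r ?expR_ge0.
rewrite -expRD le_eqVlt; apply/orP; left; apply/eqP; congr expR.
by rewrite /p; field; rewrite gt_eqF.
Qed.
End HoeffFin.

Section Traj.
Variables (R : realType) (S A : finType).

Definition fext (T : Type) m (g : {ffun 'I_m -> T}) (x : T) : {ffun 'I_m.+1 -> T} :=
  [ffun i => if unlift ord_max i is Some j then g j else x].

Lemma fext_max (T : Type) m (g : {ffun 'I_m -> T}) x : fext g x ord_max = x.
Proof. by rewrite ffunE unlift_none. Qed.

Lemma fext_lift (T : Type) m (g : {ffun 'I_m -> T}) x (j : 'I_m) :
  fext g x (lift ord_max j) = g j.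
Proof. by rewrite ffunE liftK. Qed.

Lemma fext_val (T : Type) m (g : {ffun 'I_m -> T}) x (i : 'I_m.+1) (j : 'I_m) :
  val i = val j -> fext g x i = g j.
Proof.
move=> ij; have -> : i = lift ord_max j by apply: ord_inj; rewrite lift_max.
by rewrite ffunE liftK.
Qed.

Lemma sum_fext (T : finType) m (F : {ffun 'I_m.+1 -> T} -> R) :
  \sum_f F f = \sum_(g : {ffun 'I_m -> T}) \sum_x F (fext g x).
Proof.
rewrite pair_big /=.
rewrite (reindex (fun p : {ffun 'I_m -> T} * T => fext p.1 p.2)) //.
exists (fun f : {ffun 'I_m.+1 -> T} => ([ffun j => f (lift ord_max j)], f ord_max)).
  move=> [g x] _ /=; rewrite fext_max; congr (_, _).
  by apply/ffunP => j; rewrite ffunE fext_lift.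
move=> f _ /=; apply/ffunP => i; rewrite ffunE.
by case: unliftP => [j ->|->]; rewrite ?ffunE.
Qed.


Definition text n (e : traj S A n) (a : A) (s' : S) : traj S A n.+1 :=
  (fext e.1 s', fext e.2 a).

Lemma sum_traj n (F : traj S A n.+1 -> R) :
  \sum_e F e = \sum_(e : traj S A n) \sum_a \sum_s' F (text e a s').
Proof.
rewrite (eq_bigr (fun p => F (p.1, p.2))); last by case.
rewrite -(pair_bigA _ (fun x y => F (x, y))) /= sum_fext.
transitivity (\sum_(g1 : {ffun 'I_n.+1 -> S}) \sum_(x : S)
   \sum_(g2 : {ffun 'I_n -> A}) \sum_(a : A) F (fext g1 x, fext g2 a)).
  by apply: eq_bigr => g1 _; apply: eq_bigr => x _; rewrite sum_fext.
rewrite (eq_bigr (fun p => \sum_a \sum_s' F (text (p.1, p.2) a s'))); last by case.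
rewrite -(pair_bigA _ (fun g1 g2 => \sum_a \sum_s' F (text (g1, g2) a s'))) /=.
apply: eq_bigr => g1 _; rewrite exchange_big /=; apply: eq_bigr => g2 _.
by rewrite exchange_big.
Qed.

Lemma text0 n (e : traj S A n) a s' : (text e a s').1 ord0 = e.1 ord0.
Proof. exact: fext_val. Qed.

Lemma st_text n (e : traj S A n) a s' (v : 'I_n) :
  st (text e a s') (widen_ord (leqnSn n) v) = st e v.
Proof. exact: fext_val. Qed.

Lemma act_text n (e : traj S A n) a s' (v : 'I_n) :
  act (text e a s') (widen_ord (leqnSn n) v) = act e v.
Proof. exact: fext_val. Qed.

Lemma nst_text n (e : traj S A n) a s' (v : 'I_n) :
  nst (text e a s') (widen_ord (leqnSn n) v) = nst e v.
Proof. exact: fext_val. Qed.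

Lemma st_text_max n (e : traj S A n) a s' :
  st (text e a s') ord_max = e.1 ord_max.
Proof. exact: fext_val. Qed.

Lemma act_text_max n (e : traj S A n) a s' : act (text e a s') ord_max = a.
Proof. exact: fext_max. Qed.

Lemma nst_text_max n (e : traj S A n) a s' : nst (text e a s') ord_max = s'.
Proof.
rewrite /nst /=; have -> : lift ord0 (@ord_max n) = ord_max by apply: ord_inj.
exact: fext_max.
Qed.

Lemma traj_step n (d : S -> R) (K : 'I_n.+1 -> S -> A -> S -> R) :
  \sum_(e : traj S A n.+1) d (e.1 ord0) * \prod_(v < n.+1) K v (st e v) (act e v) (nst e v)
  = \sum_(e : traj S A n) (d (e.1 ord0) *
       \prod_(v < n) K (widen_ord (leqnSn n) v) (st e v) (act e v) (nst e v)) *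
       (\sum_a \sum_s' K ord_max (e.1 ord_max) a s').
Proof.
rewrite sum_traj; apply: eq_bigr => e _.
rewrite mulr_sumr; apply: eq_bigr => a _.
rewrite mulr_sumr; apply: eq_bigr => s' _.
rewrite big_ord_recr /= (text0 e a s').
have -> := st_text_max e a s'. have -> := act_text_max e a s'.
have -> := nst_text_max e a s'.
rewrite mulrA; congr (_ * _ * _); apply: eq_bigr => v _.
by rewrite (st_text e a s') (act_text e a s') (nst_text e a s').
Qed.

Lemma sum_ffun0 (T : finType) (c : R) : \sum_(f : {ffun 'I_0 -> T}) c = c.
Proof. by rewrite sumr_const card_ffun card_ord expn0. Qed.

Lemma traj0_sum (F : S -> R) : \sum_(e : traj S A 0) F (e.1 ord0) = \sum_s F s.
Proof.
rewrite -(pair_bigA _ (fun (x : {ffun 'I_1 -> S}) (y : {ffun 'I_0 -> A}) => F (x ord0))) /=.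
under eq_bigr => x _ do rewrite sum_ffun0.
rewrite sum_fext (eq_bigr (fun _ => \sum_x F x)) ?sum_ffun0 //.
move=> g _; apply: eq_bigr => x _.
rewrite ffunE; case: unliftP => [j _|//]; by case: j.
Qed.

Lemma traj_le n (d : S -> R) (K : 'I_n -> S -> A -> S -> R) :
  (forall s, 0 <= d s) -> (forall v s a s', 0 <= K v s a s') ->
  (forall v s, \sum_a \sum_s' K v s a s' <= 1) ->
  \sum_(e : traj S A n) d (e.1 ord0) * \prod_(v < n) K v (st e v) (act e v) (nst e v)
  <= \sum_s d s.
Proof.
elim: n K => [|n IH] K d0 K0 K1.
  rewrite -traj0_sum le_eqVlt; apply/orP; left; apply/eqP.
  by apply: eq_bigr => e _; rewrite big_ord0 mulr1.
rewrite traj_step.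
apply: (le_trans _ (IH (fun v => K (widen_ord (leqnSn n) v)) d0 _ _)); last 2 first.
- by move=> *; exact: K0.
- by move=> *; exact: K1.
apply: ler_sum => e _.
rewrite -[X in _ <= X]mulr1 ler_wpM2l //.
apply: mulr_ge0 => //; apply: prodr_ge0 => v _; exact: K0.
Qed.

Lemma traj_eq n (d : S -> R) (K : 'I_n -> S -> A -> S -> R) :
  (forall v s, \sum_a \sum_s' K v s a s' = 1) ->
  \sum_(e : traj S A n) d (e.1 ord0) * \prod_(v < n) K v (st e v) (act e v) (nst e v)
  = \sum_s d s.
Proof.
elim: n K => [|n IH] K K1.
  by rewrite -traj0_sum; apply: eq_bigr => e _; rewrite big_ord0 mulr1.
rewrite traj_step -(IH (fun v => K (widen_ord (leqnSn n) v))); last by move=> *; exact: K1.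
by apply: eq_bigr => e _; rewrite K1 mulr1.
Qed.

End Traj.

Section Main.
Variables (R : realType) (S A : finType) (H : nat).
Variables (d1 : S -> R) (mu : 'I_H -> S -> A -> R) (P : S -> A -> S -> R).
Hypothesis hd1 : is_dist d1.
Hypothesis hmu : forall v s, is_dist (mu v s).
Hypothesis hP : forall s a, is_dist (P s a).
Variables (u delta : R) (l : nat) (V Vin : S -> R).
Hypotheses (hu : 0 < u) (hdelta0 : 0 < delta) (hdelta1 : delta < 1).
Hypothesis hV : forall s, `|V s - Vin s| <= 2 * u.
Hypothesis HP : (0 < H)%N.

Lemma ep_prob_ge0 e : 0 <= ep_prob d1 mu P e.
Proof.
rewrite /ep_prob mulr_ge0 ?hd1.1 //; apply: prodr_ge0 => v _.
by rewrite mulr_ge0 ?(hmu _ _).1 ?(hP _ _).1.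
Qed.

Lemma data_prob_ge0 D : 0 <= data_prob d1 mu P (l := l) D.
Proof. by apply: prodr_ge0 => j _; exact: ep_prob_ge0. Qed.

Lemma sum_ep_prob : \sum_e ep_prob d1 mu P e = 1.
Proof.
rewrite /ep_prob.
rewrite (@traj_eq R S A H d1 (fun v s0 a0 s1 => mu v s0 a0 * P s0 a0 s1)) ?hd1.2 //.
move=> v s0.
under eq_bigr => a0 _ do rewrite -mulr_sumr (hP s0 a0).2 mulr1.
exact: (hmu v s0).2.
Qed.

Lemma sum_data_prob : \sum_(D : {ffun 'I_l -> traj S A H}) data_prob d1 mu P D = 1.
Proof.
rewrite /data_prob -(bigA_distr_bigA (fun (j : 'I_l) e => ep_prob d1 mu P e)) /=.
by rewrite big1 // => j _; exact: sum_ep_prob.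
Qed.


Section Fixed.
Variables (s : S) (a : A) (b : bool).
Hypothesis hd : 0 < dsum d1 mu P s a.

Local Notation Dt := {ffun 'I_l -> traj S A H}.

Definition ind (e : traj S A H) (v : 'I_H) : R := ((st e v == s) && (act e v == a))%:R.

Definition Shat (D : Dt) : R :=
  \sum_(j < l) \sum_(v < H) (V (nst (D j) v) - Vin (nst (D j) v)) *
     ((st (D j) v == s) && (act (D j) v == a))%:R.

Definition Ncnt (D : Dt) : R := (ncount D s a)%:R.

Lemma Ncnt_sum D : Ncnt D = \sum_(j < l) \sum_(v < H) ind (D j) v.
Proof. by rewrite /Ncnt /ncount natr_sum; apply: eq_bigr => j _; rewrite natr_sum. Qed.

Definition sg : R := if b then 1 else -1.
Definition mm : R := PV P V Vin s a.
Definition Lg : R := logterm S A H delta.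
Definition kap : R := l%:R * dsum d1 mu P s a.
Definition ff : R := fbonus d1 mu P u delta l s a.

Definition Ev (D : Dt) : bool :=
  (2^-1 * l%:R * dsum d1 mu P s a < Ncnt D) &&
  (Ncnt D * ff < sg * (Shat D - Ncnt D * mm)).

Lemma card_pos : (0 < #|S|)%N /\ (0 < #|A|)%N.
Proof. by split; apply/card_gt0P; [exists s | exists a]. Qed.

Definition bigN : R := 2 * H%:R * #|S|%:R * #|A|%:R.

Lemma bigN_ge2 : 2 <= bigN.
Proof.
have [cS cA] := card_pos.
rewrite /bigN -!natrM -[2]/(2%:R) ler_nat.
by rewrite -!mulnA leq_pmulr // !muln_gt0 HP cS cA.
Qed.

Lemma Lg_pos : 0 < Lg.
Proof.
rewrite /Lg /logterm -/bigN; apply: ln_gt0.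
rewrite ltr_pdivlMr // mul1r; apply: (lt_le_trans hdelta1).
by apply: le_trans bigN_ge2; lra.
Qed.

Lemma expLg : expR Lg = bigN / delta.
Proof.
rewrite /Lg /logterm -/bigN lnK // posrE divr_gt0 //.
by apply: lt_le_trans bigN_ge2.
Qed.


Lemma X_bounds s1 : - (2 * u) <= sg * (V s1 - Vin s1) <= 2 * u.
Proof.
have := hV s1; rewrite ler_norml => /andP[h1 h2].
by rewrite /sg; case: b; rewrite ?mul1r ?mulN1r ?h1 ?h2 //= lerNl opprK h2 lerNl h1.
Qed.

Lemma step_bound (lam : R) :
  \sum_s1 P s a s1 * expR ((lam * sg * (V s1 - Vin s1 - mm) - lam ^+ 2 * (2 * u ^+ 2)) * 1) <= 1.
Proof.
have Hh := @hoeffding_fin R S (P s a) (fun s1 => sg * (V s1 - Vin s1)) (2 * u) lam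
  (hP s a).1 (hP s a).2 (mulr_gt0 (ltr0Sn R 1) hu) (fun x => proj1 (andP (X_bounds x)))
  (fun x => proj2 (andP (X_bounds x))).
have Em : \sum_y P s a y * (sg * (V y - Vin y)) = sg * mm.
  rewrite /mm /PV mulr_sumr; apply: eq_bigr => y _; ring.
rewrite Em in Hh.
have -> : \sum_s1 P s a s1 * expR ((lam * sg * (V s1 - Vin s1 - mm) - lam ^+ 2 * (2 * u ^+ 2)) * 1)
  = (\sum_s1 P s a s1 * expR (lam * (sg * (V s1 - Vin s1) - sg * mm))) * expR (- (lam ^+ 2 * (2 * u ^+ 2))).
  rewrite mulr_suml; apply: eq_bigr => y _; rewrite -[in RHS]mulrA -[in RHS]expRD; congr (_ * expR _); ring.
apply: (le_trans (ler_wpM2r (expR_ge0 _) Hh)).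
rewrite -expRD le_eqVlt; apply/orP; left; apply/eqP.
by rewrite (_ : _ + _ = 0) ?expR0 //; field.
Qed.

Section Bound.
Hypothesis lpos : (0 < l)%N.

Lemma kap_pos : 0 < kap.
Proof. by rewrite /kap mulr_gt0 // ltr0n. Qed.

Definition rr : R := Num.sqrt (Lg / kap).
Definition lam : R := rr / u.
Definition cc : R := 2 * u ^+ 2.

Lemma rr2 : rr ^+ 2 = Lg / kap.
Proof. by rewrite /rr sqr_sqrtr // divr_ge0 // ltW // ?Lg_pos ?kap_pos. Qed.

Lemma rr_ge0 : 0 <= rr.
Proof. exact: sqrtr_ge0. Qed.

Lemma ff_eq : ff = 4 * u * rr.
Proof. by []. Qed.

Definition Y (e : traj S A H) : R :=
  \prod_(v < H) expR ((lam * sg * (V (nst e v) - Vin (nst e v) - mm) - lam ^+ 2 * cc) * ind e v).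
Definition W (D : Dt) : R := \prod_(j < l) Y (D j).

Lemma W_ge0 D : 0 <= W D.
Proof. by apply: prodr_ge0 => j _; apply: prodr_ge0 => v _; exact: expR_ge0. Qed.

Lemma sum_Y : \sum_e ep_prob d1 mu P e * Y e <= 1.
Proof.
pose K := fun (v : 'I_H) s0 a0 s1 => mu v s0 a0 * P s0 a0 s1 *
   expR ((lam * sg * (V s1 - Vin s1 - mm) - lam ^+ 2 * cc) * ((s0 == s) && (a0 == a))%:R).
have -> : \sum_e ep_prob d1 mu P e * Y e =
    \sum_(e : traj S A H) d1 (e.1 ord0) * \prod_(v < H) K v (st e v) (act e v) (nst e v).
  apply: eq_bigr => e _; rewrite /ep_prob /Y -mulrA -big_split /=; congr (_ * _).
have K0 : forall v s0 a0 s1, 0 <= K v s0 a0 s1.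
  by move=> v s0 a0 s1; rewrite /K mulr_ge0 ?expR_ge0 // mulr_ge0 ?(hmu _ _).1 ?(hP _ _).1.
have K1 : forall v s0, \sum_a0 \sum_s1 K v s0 a0 s1 <= 1.
  move=> v s0; rewrite -(hmu v s0).2; apply: ler_sum => a0 _.
  rewrite (eq_bigr (fun s1 => mu v s0 a0 * (P s0 a0 s1 *
     expR ((lam * sg * (V s1 - Vin s1 - mm) - lam ^+ 2 * cc) * ((s0 == s) && (a0 == a))%:R)))); last first.
    by move=> s1 _; rewrite /K mulrA.
  rewrite -mulr_sumr -[X in _ <= X]mulr1 ler_wpM2l ?(hmu _ _).1 //.
  have [/andP[/eqP -> /eqP ->]|hne] := boolP ((s0 == s) && (a0 == a)).
    exact: step_bound.
  rewrite le_eqVlt; apply/orP; left; apply/eqP.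
  under eq_bigr => s1 _ do rewrite mulr0n mulr0 expR0 mulr1.
  exact: (hP s0 a0).2.
have := @traj_le R S A H d1 K hd1.1 K0 K1.
by rewrite hd1.2.
Qed.


Lemma Y_ge0 e : 0 <= Y e.
Proof. by apply: prodr_ge0 => v _; exact: expR_ge0. Qed.

Lemma sum_W : \sum_(D : Dt) data_prob d1 mu P D * W D <= 1.
Proof.
rewrite (eq_bigr (fun D : Dt => \prod_(j < l) (ep_prob d1 mu P (D j) * Y (D j)))); last first.
  by move=> D _; rewrite [RHS]big_split.
rewrite -(bigA_distr_bigA (fun (j : 'I_l) e => ep_prob d1 mu P e * Y e)) /=.
apply: prodr_ile1 => j _; rewrite sum_Y andbT.
by apply: sumr_ge0 => e _; rewrite mulr_ge0 ?ep_prob_ge0 ?Y_ge0.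
Qed.

Lemma Ev_W D : Ev D -> expR Lg <= W D.
Proof.
move=> /andP[h1 h2].
have -> : W D = expR (\sum_(j < l) \sum_(v < H)
   (lam * sg * (V (nst (D j) v) - Vin (nst (D j) v) - mm) - lam ^+ 2 * cc) * ind (D j) v).
  by rewrite expR_sum; apply: eq_bigr => j _; rewrite expR_sum.
rewrite ler_expR.
have -> : \sum_(j < l) \sum_(v < H)
   (lam * sg * (V (nst (D j) v) - Vin (nst (D j) v) - mm) - lam ^+ 2 * cc) * ind (D j) v
   = lam * sg * Shat D - (lam * sg * mm + lam ^+ 2 * cc) * Ncnt D.
  rewrite Ncnt_sum /Shat mulr_sumr mulr_sumr -sumrB; apply: eq_bigr => j _.
  rewrite mulr_sumr mulr_sumr -sumrB; apply: eq_bigr => v _; rewrite /ind; ring.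
have lam0 : 0 <= lam by rewrite /lam divr_ge0 ?rr_ge0 // ltW.
have key : lam * ff - lam ^+ 2 * cc = 2 * (Lg / kap).
  by rewrite ff_eq /lam /cc -rr2; field; rewrite gt_eqF.
have hk : kap <= 2 * Ncnt D.
  have : 2^-1 * kap < Ncnt D by rewrite /kap mulrA.
  lra.
have LgN : Lg <= Ncnt D * (2 * (Lg / kap)).
  have -> : Ncnt D * (2 * (Lg / kap)) = Lg + Lg * (2 * Ncnt D - kap) / kap.
    by field; rewrite gt_eqF ?kap_pos.
  rewrite lerDl; apply: divr_ge0; last exact: ltW kap_pos.
  by apply: mulr_ge0; [exact: ltW Lg_pos | rewrite subr_ge0].
apply: (le_trans LgN); rewrite -key.
have -> : lam * sg * Shat D - (lam * sg * mm + lam ^+ 2 * cc) * Ncnt D =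
   lam * (sg * (Shat D - Ncnt D * mm)) - lam ^+ 2 * cc * Ncnt D by ring.
have -> : Ncnt D * (lam * ff - lam ^+ 2 * cc) = lam * (Ncnt D * ff) - lam ^+ 2 * cc * Ncnt D by ring.
by rewrite lerD2r ler_wpM2l // ltW.
Qed.

Lemma ev_bound_pos : \sum_(D : Dt | Ev D) data_prob d1 mu P D <= delta / bigN.
Proof.
apply: (@le_trans _ _ (\sum_(D : Dt) data_prob d1 mu P D * W D / expR Lg)).
  rewrite big_mkcond /=; apply: ler_sum => D _; case: ifP => hE.
    rewrite -mulrA -[X in X <= _]mulr1 ler_wpM2l ?data_prob_ge0 //.
    by rewrite ler_pdivlMr ?expR_gt0 // mul1r; exact: Ev_W.
  by rewrite divr_ge0 ?expR_ge0 // mulr_ge0 ?data_prob_ge0 ?W_ge0.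
rewrite -mulr_suml expLg.
apply: (le_trans (ler_wpM2r _ sum_W)).
  by rewrite invr_ge0 divr_ge0 // ?ltW // (lt_le_trans _ bigN_ge2).
by rewrite mul1r invf_div.
Qed.

End Bound.

Lemma ev_bound : \sum_(D : Dt | Ev D) data_prob d1 mu P D <= delta / bigN.
Proof.
have [l0|lpos] := posnP l; last exact: ev_bound_pos.
rewrite big_pred0; first by rewrite divr_ge0 // ltW // (lt_le_trans _ bigN_ge2).
move=> D; apply/negbTE; rewrite /Ev negb_and; apply/orP; left.
rewrite -leNgt /Ncnt /ncount big1; last by move=> [j' hj] _; exfalso; move: hj; rewrite l0.
by rewrite l0 mulr0 mul0r.
Qed.


End Fixed.

Lemma good_of s a (D : {ffun 'I_l -> traj S A H}) : 0 < dsum d1 mu P s a ->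
  ~~ Ev s a true D -> ~~ Ev s a false D ->
  (0 <= PV P V Vin s a - gest d1 mu P V Vin u delta D s a) &&
  (PV P V Vin s a - gest d1 mu P V Vin u delta D s a
     <= 8 * u * Num.sqrt (logterm S A H delta / (l%:R * dsum d1 mu P s a))).
Proof.
move=> hd n1 n2.
have e8 : 8 * u * Num.sqrt (logterm S A H delta / (l%:R * dsum d1 mu P s a)) = 2 * ff s a.
  by rewrite /ff /fbonus; ring.
have ff0 : 0 <= ff s a by rewrite /ff /fbonus mulr_ge0 ?sqrtr_ge0 // mulr_ge0 // ltW.
rewrite e8.
case hN : ((ncount D s a)%:R <= 2^-1 * l%:R * dsum d1 mu P s a).
  have -> : gest d1 mu P V Vin u delta D s a = PV P V Vin s a - ff s a by rewrite /gest hN.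
  apply/andP; split; lra.
have -> : gest d1 mu P V Vin u delta D s a = (Ncnt s a D)^-1 * Shat s a D - ff s a.
  by rewrite /gest hN.
have hN' : 2^-1 * l%:R * dsum d1 mu P s a < Ncnt s a D by rewrite ltNge hN.
have Npos : 0 < Ncnt s a D.
  apply: le_lt_trans hN'; apply: mulr_ge0; last exact: ltW.
  by apply: mulr_ge0; rewrite ?invr_ge0 ler0n.
move: n1 n2; rewrite /Ev hN' /= /sg -!leNgt mul1r mulN1r => h1 h2.
set N := Ncnt s a D in h1 h2 Npos *.
set q := N^-1 * Shat s a D.
have Sq : Shat s a D = N * q by rewrite /q mulrA divff ?mul1r // gt_eqF.
rewrite Sq in h1 h2.
have h1' : N * (q - mm s a) <= N * ff s a by rewrite mulrBr.
have h2' : N * (mm s a - q) <= N * ff s a by rewrite mulrBr; lra.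
rewrite ler_pM2l // in h1'. rewrite ler_pM2l // in h2'.
rewrite -/(mm s a).
apply/andP; split; lra.
Qed.


Lemma le_sum_term (I : finType) (F : I -> R) i :
  (forall j, 0 <= F j) -> F i <= \sum_j F j.
Proof. by move=> F0; rewrite (bigD1 i) //= lerDl sumr_ge0. Qed.

Definition good (D : {ffun 'I_l -> traj S A H}) : bool :=
  [forall s : S, forall a : A,
          (0 < dsum d1 mu P s a) ==>
          ((0 <= PV P V Vin s a - gest d1 mu P V Vin u delta D s a) &&
           (PV P V Vin s a - gest d1 mu P V Vin u delta D s a
              <= 8 * u * Num.sqrt (logterm S A H delta
                                   / (l%:R * dsum d1 mu P s a))))].

Definition BB (x : S * A * bool) (D : {ffun 'I_l -> traj S A H}) : R :=
  ((0 < dsum d1 mu P x.1.1 x.1.2) && Ev x.1.1 x.1.2 x.2 D)%:R.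

Lemma BB_ge0 x D : 0 <= BB x D.
Proof. exact: ler0n. Qed.

Lemma notgood_BB D : ~~ good D -> 1 <= \sum_x BB x D.
Proof.
move=> /forallPn [s0 /forallPn [a0]]; rewrite negb_imply => /andP[hd0 hc].
have : Ev s0 a0 true D || Ev s0 a0 false D.
  apply/negPn; rewrite negb_or; apply/negP => /andP[n1 n2].
  by move: hc; rewrite good_of.
case/orP => hE.
  apply: (le_trans _ (@le_sum_term _ (BB^~ D) (s0, a0, true) (BB_ge0^~ D))).
  by rewrite /BB /= hd0 hE.
apply: (le_trans _ (@le_sum_term _ (BB^~ D) (s0, a0, false) (BB_ge0^~ D))).
by rewrite /BB /= hd0 hE.
Qed.

Lemma BB_bound x : \sum_D data_prob d1 mu P D * BB x D <= delta / bigN.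
Proof.
case: x => [[s0 a0] b0]; rewrite /BB /=.
have [hd0|hd0] := boolP (0 < dsum d1 mu P s0 a0); last first.
  rewrite big1; first by rewrite divr_ge0 // ltW // (lt_le_trans _ (bigN_ge2 s0 a0)).
  by move=> D _ /=; rewrite mulr0.
apply: (le_trans _ (@ev_bound s0 a0 b0 hd0)).
rewrite le_eqVlt; apply/orP; left; apply/eqP.
rewrite [RHS]big_mkcond; apply: eq_bigr => D _ /=.
by case: (Ev s0 a0 b0 D); rewrite ?mulr1 ?mulr0.
Qed.

Lemma main_bound :
  1 - delta / H%:R <=
  \sum_(D : {ffun 'I_l -> traj S A H} |
        [forall s : S, forall a : A,
          (0 < dsum d1 mu P s a) ==>
          ((0 <= PV P V Vin s a - gest d1 mu P V Vin u delta D s a) &&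
           (PV P V Vin s a - gest d1 mu P V Vin u delta D s a
              <= 8 * u * Num.sqrt (logterm S A H delta
                                   / (l%:R * dsum d1 mu P s a))))])
    data_prob d1 mu P D.
Proof.
change (1 - delta / H%:R <= \sum_(D | good D) data_prob d1 mu P D).
have hs := sum_data_prob.
rewrite (bigID good) /= in hs.
suff hb : \sum_(D | ~~ good D) data_prob d1 mu P D <= delta / H%:R by lra.
apply: (@le_trans _ _ (\sum_D data_prob d1 mu P D * \sum_x BB x D)).
  rewrite [X in X <= _]big_mkcond /=; apply: ler_sum => D _.
  case: ifP => hg.
    by rewrite -[X in X <= _]mulr1 ler_wpM2l ?data_prob_ge0 // notgood_BB.
  by rewrite mulr_ge0 ?data_prob_ge0 // sumr_ge0.
under eq_bigr => D _ do rewrite mulr_sumr.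
rewrite exchange_big /=.
apply: (@le_trans _ _ (\sum_(x : S * A * bool) delta / bigN)).
  by apply: ler_sum => x _; exact: BB_bound.
rewrite sumr_const !card_prod card_bool /bigN.
have hH : H%:R != 0 :> R by rewrite pnatr_eq0 -lt0n.
have [z|nz] := posnP (#|S| * #|A|)%N.
  by rewrite z mul0n mulr0n divr_ge0 // ltW.
have /andP[cS cA] : (0 < #|S|)%N && (0 < #|A|)%N by rewrite -muln_gt0.
have hS : #|S|%:R != 0 :> R by rewrite pnatr_eq0 -lt0n.
have hA : #|A|%:R != 0 :> R by rewrite pnatr_eq0 -lt0n.
rewrite -(mulr_natr (delta / _) (#|S| * #|A| * 2)) !natrM le_eqVlt; apply/orP; left; apply/eqP.
by field; rewrite hH hS hA.
Qed.

End Main.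

Theorem lemmaC3 (R : realType) (S A : finType) (H : nat)
  (d1 : S -> R) (mu : 'I_H -> S -> A -> R) (P : S -> A -> S -> R)
  (hd1 : is_dist d1)
  (hmu : forall (v : 'I_H) (s : S), is_dist (mu v s))
  (hP : forall (s : S) (a : A), is_dist (P s a))
  (t : 'I_H) (u delta : R) (l : nat)
  (V Vin : S -> R)
  (hu : 0 < u) (hdelta0 : 0 < delta) (hdelta1 : delta < 1)
  (hV : forall s : S, `|V s - Vin s| <= 2 * u) :
  1 - delta / H%:R <=
  \sum_(D : {ffun 'I_l -> traj S A H} |
        [forall s : S, forall a : A,
          (0 < dsum d1 mu P s a) ==>
          ((0 <= PV P V Vin s a - gest d1 mu P V Vin u delta D s a) &&
           (PV P V Vin s a - gest d1 mu P V Vin u delta D s a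
              <= 8 * u * Num.sqrt (logterm S A H delta
                                   / (l%:R * dsum d1 mu P s a))))])
    data_prob d1 mu P D.
Proof.
apply: main_bound => //.
by case: t => t' /= ht; apply: leq_ltn_trans ht.
Qed.
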